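(* Let $p,q$ be positive integers with $1<q<p-q$ and $\gcd(p,q)=1$, let $A=\langle q,p-q\rangle$, let $s\in A\setminus\{0\}$, and let $r$ be a positive integer with $1<r<s-r$ and $\gcd(r,s)=1$; put $B=\langle r,s-r\rangle$. Let $M$ be the submonoid of $\mathbb{Q}^+$ generated by all $k/r$ with $k\in A$ and all $\frac{k'}{r}(s/r)^n$ with $k'\in B$, $n\ge1$, and let $(G,G^+)=(M+(-M),M)$. Let $D=\{x\in G^+: x\le_G (s/r)^n \text{ for some } n\ge1\}$. Then $tD\neq G^+$ for every positive integer $t\le r-1$, and $rD=G^+$.
   Context: $\langle a_1,\dots,a_k\rangle$ is the submonoid of $\mathbb{Z}^+$ generated by the $a_i$. $x\le_G y$ means $y-x\in G^+$. An interval in $G^+$ is a nonempty, upward directed, order-hereditary subset of $G^+$. For intervals $X,Y$, $X+Y=\{z\in G^+: z\le x+y,\ x\in X,\ y\in Y\}$; $tX$ is the $t$-fold sum of $X$ with itself. *)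

(* Defs.v *)
From mathcomp Require Import all_boot all_algebra.
Set Implicit Arguments. Unset Strict Implicit. Unset Printing Implicit Defensive.
Import GRing.Theory Num.Theory.
Local Open Scope ring_scope.

Definition nmon2 (a b : nat) (k : nat) : Prop :=
  exists i j : nat, k = (i * a + j * b)%N.

Inductive qmon (S : rat -> Prop) : rat -> Prop :=
| qmon0 : qmon S 0
| qmonS x y : S x -> qmon S y -> qmon S (x + y).

Definition Mgens (p q r s : nat) (x : rat) : Prop :=
  (exists k : nat, nmon2 q (p - q) k /\ x = k%:R / r%:R) \/
  (exists (k' n : nat), nmon2 r (s - r) k' /\ (1 <= n)%N /\
     x = k'%:R / r%:R * (s%:R / r%:R) ^+ n).

Definition Mpos (p q r s : nat) : rat -> Prop := qmon (Mgens p q r s).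

Definition leG (P : rat -> Prop) (x y : rat) : Prop := P (y - x).

Definition isum (P : rat -> Prop) (X Y : rat -> Prop) (z : rat) : Prop :=
  P z /\ exists x y, X x /\ Y y /\ leG P z (x + y).

(* t-fold sum tX (t >= 1; the 0-fold sum is taken to be {0}) *)
Fixpoint imul (P : rat -> Prop) (t : nat) (X : rat -> Prop) : rat -> Prop :=
  match t with
  | 0 => fun z => z = 0
  | 1 => X
  | n.+1 => isum P X (imul P n X)
  end.

Definition Dset (p q r s : nat) (x : rat) : Prop :=
  Mpos p q r s x /\
  exists n : nat, (1 <= n)%N /\ leG (Mpos p q r s) x ((s%:R / r%:R) ^+ n).

(* Main.v *)
Require Import Defs.
From mathcomp Require Import all_boot all_algebra zify ring.
Import GRing.Theory Num.Theory.
Local Open Scope nat_scope.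

Lemma nmon2_0 a b : nmon2 a b 0.
Proof. by exists 0, 0. Qed.

Lemma nmon2_add a b x y : nmon2 a b x -> nmon2 a b y -> nmon2 a b (x + y).
Proof. move=> [i [j ->]] [i' [j' ->]]; exists (i + i'), (j + j'); ring. Qed.

Lemma nmon2_mul a b c x : nmon2 a b x -> nmon2 a b (c * x).
Proof. move=> [i [j ->]]; exists (c * i), (c * j); ring. Qed.

Fixpoint RepN (p q r s : nat) (N : nat) (w : nat) : Prop :=
  match N with
  | 0 => nmon2 q (p - q) w
  | N'.+1 => exists K w', nmon2 r (s - r) K /\ RepN p q r s N' w' /\
                          w = r * w' + K * s ^ N
  end.

Lemma RepN0 p q r s N : RepN p q r s N 0.
Proof.
elim: N => [|N IH] /=; first exact: nmon2_0.
exists 0, 0; split; [exact: nmon2_0 | split => //]; ring.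
Qed.

Lemma RepN_add p q r s N w1 w2 :
  RepN p q r s N w1 -> RepN p q r s N w2 -> RepN p q r s N (w1 + w2).
Proof.
elim: N w1 w2 => [|N IH] w1 w2 /=; first exact: nmon2_add.
move=> [K1 [w1' [B1 [R1 ->]]]] [K2 [w2' [B2 [R2 ->]]]].
exists (K1 + K2), (w1' + w2'); split; first exact: nmon2_add.
split; first exact: IH. ring.
Qed.

Lemma RepN_lift p q r s N w : RepN p q r s N w -> RepN p q r s N.+1 (r * w).
Proof. move=> H /=; exists 0, w; split; [exact: nmon2_0|split => //]; ring. Qed.

Lemma RepN_liftk p q r s N k w :
  RepN p q r s N w -> RepN p q r s (N + k) (r ^ k * w).
Proof.
elim: k w => [|k IH] w H; first by rewrite addn0 expn0 mul1n.
rewrite addnS expnS -mulnA; apply: RepN_lift; exact: IH.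
Qed.

Lemma RepN_addtop p q r s N w c :
  nmon2 q (p - q) s -> (r <= s) ->
  RepN p q r s N w -> RepN p q r s N (w + c * s * s ^ N).
Proof.
move=> As rs; case: N => [|N] /=.
  move=> H; rewrite expn0 muln1; apply: nmon2_add => //; exact: nmon2_mul.
move=> [K [w' [BK [R ->]]]]; exists (K + c * s), w'; split.
  apply: nmon2_add => //; apply: nmon2_mul; exists 1, 1; lia.
split => //; ring.
Qed.

Lemma RepN_desc p q r s N v :
  nmon2 q (p - q) s -> (r <= s) -> 0 < r -> coprime r s ->
  RepN p q r s N.+1 (r * v) -> RepN p q r s N v.
Proof.
move=> As rs r0 crs /= [K [w' [[i [j EK]] [R E]]]].
have dj : r %| j.
  have cr : coprime r (s ^ N.+2) by exact: coprimeXr.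
  rewrite -(Gauss_dvdl _ cr).
  have E2 : j * s ^ N.+2 + r * (w' + i * s ^ N.+1) = r * (v + j * s ^ N.+1).
    rewrite [RHS]mulnDr E EK !expnS.
    have Hs : s = (s - r) + r by rewrite subnK.
    move: (s - r) Hs => d Hs; rewrite Hs. ring.
  have : r %| j * s ^ N.+2 + r * (w' + i * s ^ N.+1) by rewrite E2 dvdn_mulr.
  by rewrite dvdn_addl // dvdn_mulr.
case/dvdnP: dj => j' ej.
have E3 : r * v = r * (w' + (i + j' * (s - r)) * s * s ^ N).
  rewrite E EK ej expnS; ring.
have -> : v = w' + (i + j' * (s - r)) * s * s ^ N.
  by apply/eqP; rewrite -(eqn_pmul2l r0) E3.
exact: RepN_addtop.
Qed.

Lemma dvd_from_eq r Z a c e :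
  coprime r Z -> a * r + e * Z = c * r -> r %| e.
Proof.
move=> cr E.
rewrite -(Gauss_dvdl _ cr).
have : r %| a * r + e * Z by rewrite E dvdn_mull.
by rewrite dvdn_addr // dvdn_mull.
Qed.

Lemma dvd_from_eq2 r Z a c e :
  coprime r Z -> a * r = c * r + e * Z -> r %| e.
Proof.
move=> cr E.
rewrite -(Gauss_dvdl _ cr).
have : r %| c * r + e * Z by rewrite -E dvdn_mull.
by rewrite dvdn_addr // dvdn_mull.
Qed.

Lemma neg_main p q r s n : coprime r s -> 0 < r -> r < s - r ->
  forall w t, RepN p q r s n w -> t < r -> w + s * r ^ n.+1 = t * s ^ n.+1 -> False.
Proof.
move=> crs r0 rsr; elim: n => [|n IH] w t.
  move=> _ tr; rewrite !expn1 => E.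
  have : s * r <= t * s by rewrite -E leq_addl.
  rewrite mulnC leq_pmul2r; last by lia.
  by rewrite leqNgt tr.
move=> /= [K [w' [[i [j EK]] [R Ew]]]] tr E.
have Hs : s = (s - r) + r by rewrite subnK //; lia.
move: E; rewrite Ew EK; rewrite [s ^ n.+2]expnS [r ^ n.+2]expnS.
have cX : coprime r (s * s ^ n.+1) by rewrite coprimeMr crs coprimeXr.
move: cX; move Hx : (s ^ n.+1) => X; move Hy : (r ^ n.+1) => Y => cX E.
have ejt : j = t.
  case: (leqP t j) => tj.
    move: tj => /subnK Hj; move: (j - t) Hj => e Hj.
    have E1 : (w' + i * X + s * Y) * r + e * (s * X) = (t * X + e * X) * r.
      rewrite -Hj in E. move: E. move: (s - r) Hs => d ->. nia.
    have /dvdnP [e' He] := @dvd_from_eq r (s * X) _ _ e cX E1.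
    have X0 : 0 < X by rewrite -Hx expn_gt0; lia.
    have E2 : w' + i * X + s * Y + e' * s * X = t * X + e' * r * X.
      apply/eqP; rewrite -(eqn_pmul2r r0); apply/eqP; move: E1; rewrite He; nia.
    have E3 : e' * s <= t + e' * r.
      rewrite -(leq_pmul2r X0); nia.
    have : e' = 0 by nia.
    move=> e0; rewrite -Hj He e0; lia.
  move: tj => /ltnW /subnK Hj; move: (t - j) Hj => e Hj.
  have E1 : (w' + i * X + s * Y) * r = (j * X) * r + e * (s * X).
    rewrite -Hj in E. move: E. move: (s - r) Hs => d ->. nia.
  have /dvdnP [e' He] := @dvd_from_eq2 r (s * X) _ _ e cX E1.
  have : e' * r < 1 * r by lia.
  rewrite ltn_pmul2r // ltnS leqn0 => /eqP e0.
  rewrite -Hj He e0; lia.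
subst j.
have X0 : 0 < X by rewrite -Hx expn_gt0; lia.
have E2 : w' + i * X + s * Y = t * X.
  apply/eqP; rewrite -(eqn_pmul2r r0); apply/eqP; move: E; move: (s - r) Hs => d ->. nia.
have it : i <= t by rewrite -(leq_pmul2r X0); nia.
apply: (IH w' (t - i) R); first by lia.
rewrite Hx Hy mulnBl; lia.
Qed.

Lemma desc p q r s m : nmon2 q (p - q) s -> r <= s -> 0 < r -> coprime r s ->
  forall k w t, RepN p q r s (m + k) w ->
  w + s * r ^ (m.+1 + k) = t * s ^ m.+1 * r ^ k ->
  exists w0, RepN p q r s m w0 /\ w0 + s * r ^ m.+1 = t * s ^ m.+1.
Proof.
move=> As rs r0 crs; elim=> [|k IH] w t.
  by rewrite !addn0 muln1 => R E; exists w.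
rewrite addnS => R E.
have dw : r %| w.
  have h2 : r %| s * r ^ (m.+1 + k.+1) by rewrite addnS expnS mulnCA dvdn_mulr.
  have : r %| w + s * r ^ (m.+1 + k.+1).
    by rewrite E; apply: dvdn_mull; rewrite expnS dvdn_mulr.
  by rewrite (dvdn_addl _ h2).
have [v Ev] : exists v, w = r * v by exists (w %/ r); rewrite mulnC divnK.
rewrite Ev in R E.
apply: (IH _ t (@RepN_desc _ _ _ _ _ _ As rs r0 crs R)).
apply/eqP; rewrite -(eqn_pmul2l r0); apply/eqP.
move: E; rewrite addnS !expnS; nia.
Qed.
Local Open Scope ring_scope.

Lemma qmon_add S x y : qmon S x -> qmon S y -> qmon S (x + y).
Proof.
move=> H; elim: H y => [|a b Sa _ IH] y Hy; first by rewrite add0r.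
rewrite -addrA; apply: qmonS => //; exact: IH.
Qed.

Lemma qmon_nat S c x : qmon S x -> qmon S (c%:R * x).
Proof.
move=> H; elim: c => [|c IH]; first by rewrite mul0r; exact: qmon0.
by rewrite -addn1 natrD mulrDl mul1r addrC; apply: qmon_add.
Qed.

Lemma qmon_gen S x : S x -> qmon S x.
Proof. by move=> H; rewrite -[x]addr0; apply: qmonS => //; exact: qmon0. Qed.

Lemma rnz (r : nat) : (0 < r)%N -> r%:R != 0 :> rat.
Proof. by move=> r0; rewrite pnatr_eq0 -lt0n. Qed.
Arguments rnz {r}.

Lemma M_unat p q r s c n : (0 < r)%N -> (1 <= n)%N ->
  Mpos p q r s (c%:R * (s%:R / r%:R) ^+ n).
Proof.
move=> r0 n1; apply: qmon_gen; right; exists (c * r)%N, n; split.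
  by exists c, 0%N; rewrite mul0n addn0.
split => //; rewrite natrM mulfK //; exact: rnz.
Qed.

Lemma M_step p q r s n : (0 < r)%N -> (r <= s)%N -> (1 <= n)%N ->
  Mpos p q r s ((s%:R / r%:R) ^+ n.+1 - (s%:R / r%:R) ^+ n).
Proof.
move=> r0 rs n1; apply: qmon_gen; right; exists (s - r)%N, n; split.
  by exists 0%N, 1%N; rewrite mul0n add0n mul1n.
split => //; rewrite natrB // exprS.
have := rnz r0; move: (r%:R) => R Rz; field.
exact: Rz.
Qed.

Lemma M_steps p q r s n d : (0 < r)%N -> (r <= s)%N -> (1 <= n)%N ->
  Mpos p q r s ((s%:R / r%:R) ^+ (n + d) - (s%:R / r%:R) ^+ n).
Proof.
move=> r0 rs n1; elim: d => [|d IH]; first by rewrite addn0 subrr; exact: qmon0.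
have -> : (s%:R / r%:R) ^+ (n + d.+1) - (s%:R / r%:R) ^+ n =
   ((s%:R / r%:R) ^+ (n + d).+1 - (s%:R / r%:R) ^+ (n + d)) +
   ((s%:R / r%:R) ^+ (n + d) - (s%:R / r%:R) ^+ n) :> rat.
  by rewrite addnS; ring.
apply: qmon_add => //; apply: M_step => //; lia.
Qed.

Lemma A_cover p q s k : nmon2 q (p - q) s -> s <> 0%N -> (0 < q)%N -> (0 < p - q)%N ->
  nmon2 q (p - q) k -> exists c a b, (c * s = k + a * q + b * (p - q))%N.
Proof.
move=> [al [be Es]] s0 q0 pq0 [i [j ->]].
move: (p - q)%N pq0 Es => P P0 Es.
have [cq [aq [bq Hq]]] : exists c a b, (c * s = q + a * q + b * P)%N.
  case: al Es => [|al] Es.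
    exists q, (P - 1)%N, (q * (be - 1))%N.
    case: be Es => [|be] Es; first by rewrite Es in s0; lia.
    rewrite Es; nia.
  by exists 1%N, al, be; rewrite Es; lia.
have [cp [ap [bp Hp]]] : exists c a b, (c * s = P + a * q + b * P)%N.
  case: be Es => [|be] Es.
    exists P, (P * (al - 1))%N, (q - 1)%N.
    case: al Es => [|al] Es; first by rewrite Es in s0; lia.
    rewrite Es; nia.
  by exists 1%N, al, be; rewrite Es; lia.
exists (i * cq + j * cp)%N, (i * aq + j * ap)%N, (i * bq + j * bp)%N.
rewrite mulnDl -!mulnA Hq Hp; ring.
Qed.

Lemma gen_bound p q r s g : nmon2 q (p - q) s -> s <> 0%N -> (0 < q)%N ->
  (0 < p - q)%N -> (0 < r)%N -> (r <= s)%N ->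
  Mgens p q r s g -> exists c n, (1 <= n)%N /\
    Mpos p q r s (c%:R * (s%:R / r%:R) ^+ n - g).
Proof.
move=> As s0 q0 pq0 r0 rs [[k [Ak ->]] | [k' [n [[i [j ->]] [n1 ->]]]]].
  have [c [a [b Hc]]] := @A_cover p q s k As s0 q0 pq0 Ak.
  exists c, 1%N; split => //; apply: qmon_gen; left.
  exists (a * q + b * (p - q))%N; split; first by exists a, b.
  have E : (a * q + b * (p - q))%:R = c%:R * s%:R - k%:R :> rat.
    by apply: (addrI k%:R); rewrite [k%:R + (_ - _)]addrC subrK -natrD -natrM Hc addnA.
  rewrite E expr1; have := rnz r0; move: (r%:R) => R Rz; field; exact: Rz.
exists (i + j)%N, n.+1; split => //.
have -> : (i + j)%:R * (s%:R / r%:R) ^+ n.+1 - (i * r + j * (s - r))%:R / r%:R * (s%:R / r%:R) ^+ n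
   = i%:R * ((s%:R / r%:R) ^+ n.+1 - (s%:R / r%:R) ^+ n) + j%:R * (s%:R / r%:R) ^+ n :> rat.
  rewrite natrD natrD !natrM natrB // exprS.
  have := rnz r0; move: (r%:R) => R Rz; field; exact: Rz.
apply: qmon_add; first (apply: qmon_nat; exact: M_step).
exact: M_unat.
Qed.

Lemma M_grow p q r s n j : (0 < r)%N -> (r < s - r)%N -> (1 <= n)%N ->
  Mpos p q r s (r%:R * (s%:R / r%:R) ^+ (n + j) - j%:R * (s%:R / r%:R) ^+ n).
Proof.
move=> r0 rsr n1; elim: j => [|j IH].
  by rewrite addn0 mul0r subr0; exact: M_unat.
have rs : (r <= s)%N by lia.
have -> : r%:R * (s%:R / r%:R) ^+ (n + j.+1) - j.+1%:R * (s%:R / r%:R) ^+ n =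
  ((s - r - 1)%:R * (s%:R / r%:R) ^+ (n + j) +
   ((s%:R / r%:R) ^+ (n + j) - (s%:R / r%:R) ^+ n)) +
  (r%:R * (s%:R / r%:R) ^+ (n + j) - j%:R * (s%:R / r%:R) ^+ n) :> rat.
  rewrite natrB; last by lia.
  rewrite natrB // addnS exprS -addn1 natrD.
  have := rnz r0; move: (r%:R) => R Rz; field; exact: Rz.
apply: qmon_add => //; apply: qmon_add; last exact: M_steps.
apply: M_unat => //; lia.
Qed.

Lemma M_bound p q r s z : nmon2 q (p - q) s -> s <> 0%N -> (0 < q)%N ->
  (0 < p - q)%N -> (0 < r)%N -> (r < s - r)%N ->
  Mpos p q r s z -> exists n, (1 <= n)%N /\
    Mpos p q r s (r%:R * (s%:R / r%:R) ^+ n - z).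
Proof.
move=> As s0 q0 pq0 r0 rsr H.
have rs : (r <= s)%N by lia.
suff [c [n [n1 Hc]]] : exists c n, (1 <= n)%N /\
    Mpos p q r s (c%:R * (s%:R / r%:R) ^+ n - z).
  exists (n + c)%N; split; first by lia.
  have -> : r%:R * (s%:R / r%:R) ^+ (n + c) - z =
    (r%:R * (s%:R / r%:R) ^+ (n + c) - c%:R * (s%:R / r%:R) ^+ n) +
    (c%:R * (s%:R / r%:R) ^+ n - z) by ring.
  apply: qmon_add => //; exact: M_grow.
elim: H => [|g y Hg _ [c2 [n2 [n21 IH]]]].
  by exists 0%N, 1%N; split => //; rewrite mul0r subr0; exact: qmon0.
have [c1 [n1 [n11 H1]]] := @gen_bound p q r s g As s0 q0 pq0 r0 rs Hg.
exists (c1 + c2)%N, (n1 + n2)%N; split; first by lia.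
have -> : (c1 + c2)%:R * (s%:R / r%:R) ^+ (n1 + n2) - (g + y) =
  (c1%:R * ((s%:R / r%:R) ^+ (n1 + n2) - (s%:R / r%:R) ^+ n1) +
   c2%:R * ((s%:R / r%:R) ^+ (n2 + n1) - (s%:R / r%:R) ^+ n2)) +
  ((c1%:R * (s%:R / r%:R) ^+ n1 - g) + (c2%:R * (s%:R / r%:R) ^+ n2 - y)) :> rat.
  rewrite natrD (addnC n2 n1); ring.
apply: qmon_add; apply: qmon_add => //; apply: qmon_nat; exact: M_steps.
Qed.

Lemma M_rep p q r s z : (0 < r)%N -> Mpos p q r s z ->
  exists N w, RepN p q r s N w /\ z = w%:R / r%:R ^+ N.+1.
Proof.
move=> r0; elim => [|g y Hg _ [N2 [w2 [R2 E2]]]].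
  by exists 0%N, 0%N; split; [exact: RepN0 | rewrite mul0r].
have [N1 [w1 [R1 E1]]] : exists N w, RepN p q r s N w /\ g = w%:R / r%:R ^+ N.+1.
  case: Hg => [[k [Ak ->]] | [k' [n [Bk [n1 ->]]]]].
    by exists 0%N, k; split => //; rewrite expr1.
  exists n, (k' * s ^ n)%N; split.
    case: n n1 => [|n] // _ /=; exists k', 0%N; split => //; split; first exact: RepN0.
    by rewrite muln0 add0n.
  rewrite natrM natrX exprS.
  have := rnz r0; move: (r%:R) => R Rz; rewrite expr_div_n; field; by rewrite expf_neq0 // Rz.
exists (N1 + N2)%N, (r ^ N2 * w1 + r ^ N1 * w2)%N; split.
  apply: RepN_add; first exact: RepN_liftk.
  rewrite addnC; exact: RepN_liftk.
rewrite E1 E2 natrD !natrM !natrX.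
have := rnz r0; move: (r%:R) => R Rz.
rewrite -addSn !exprD !exprS.
have h1 := expf_neq0 N1 Rz; have h2 := expf_neq0 N2 Rz.
move: (R ^+ N1) (R ^+ N2) h1 h2 => X Y h1 h2; field.
by rewrite h1 h2 Rz.
Qed.

Lemma notin p q r s n t : nmon2 q (p - q) s -> (0 < r)%N -> (r < s - r)%N ->
  coprime r s -> (t < r)%N ->
  Mpos p q r s (t%:R * (s%:R / r%:R) ^+ n.+1 - s%:R) -> False.
Proof.
move=> As r0 rsr crs tr H.
have rs : (r <= s)%N by lia.
have [N [w [R E]]] := @M_rep p q r s _ r0 H.
have R' : RepN p q r s (n + N.+1) (r ^ n.+1 * w).
  have -> : (n + N.+1 = N + n.+1)%N by lia.
  exact: RepN_liftk.
have Enat : (r ^ n.+1 * w + s * r ^ (n.+1 + N.+1) = t * s ^ n.+1 * r ^ N.+1)%N.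
  apply/eqP; rewrite -(eqr_nat rat) natrD !natrM !natrX; apply/eqP.
  have Rz := rnz r0.
  have Ew := congr1 (fun x => x * r%:R ^+ N.+1) E; simpl in Ew.
  rewrite mulfVK in Ew; last by rewrite expf_neq0.
  rewrite -Ew exprD expr_div_n !exprS.
  have h1 := expf_neq0 N Rz; have h2 := expf_neq0 n Rz.
  move: (r%:R) (r%:R ^+ N) (r%:R ^+ n) (s%:R ^+ n) Rz h1 h2 => X Y Z W Rz h1 h2.
  field; by rewrite Rz h2.
have [w0 [R0 E0]] := @desc p q r s n As rs r0 crs _ _ _ R' Enat.
exact: (@neg_main p q r s n crs r0 rsr _ _ R0 tr E0).
Qed.

Lemma imulS P n X : (0 < n)%N -> imul P n.+1 X = isum P X (imul P n X).
Proof. by case: n. Qed.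

Lemma tD_bound p q r s t : (0 < r)%N -> (r <= s)%N -> (1 <= t)%N ->
  forall z, imul (Mpos p q r s) t (Dset p q r s) z ->
  Mpos p q r s z /\ exists n, (1 <= n)%N /\
     Mpos p q r s (t%:R * (s%:R / r%:R) ^+ n - z).
Proof.
move=> r0 rs; elim: t => [|t IH] // _ z.
case: t IH => [|t] IH.
  by move=> [Pz [n [n1 H]]]; split => //; exists n; split => //; rewrite mul1r.
rewrite imulS // => [[Pz [x [y [[_ [n1 [n11 Hx]]] [Hy Hxy]]]]]].
have [_ [n2 [n21 Hy2]]] := IH isT y Hy.
split => //; exists (n1 + n2)%N; split; first by lia.
have -> : t.+2%:R * (s%:R / r%:R) ^+ (n1 + n2) - z =
  ((s%:R / r%:R) ^+ (n1 + n2) - (s%:R / r%:R) ^+ n1) +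
  t.+1%:R * ((s%:R / r%:R) ^+ (n2 + n1) - (s%:R / r%:R) ^+ n2) +
  ((s%:R / r%:R) ^+ n1 - x) + (t.+1%:R * (s%:R / r%:R) ^+ n2 - y) +
  (x + y - z) :> rat.
  rewrite (addnC n2 n1) -(addn1 t.+1) natrD; ring.
apply: qmon_add => //; apply: qmon_add => //; apply: qmon_add => //.
apply: qmon_add; first exact: M_steps.
apply: qmon_nat; exact: M_steps.
Qed.

Lemma tD_intro p q r s t : (0 < r)%N -> (1 <= t)%N ->
  forall z n, (1 <= n)%N -> Mpos p q r s z ->
  Mpos p q r s (t%:R * (s%:R / r%:R) ^+ n - z) ->
  imul (Mpos p q r s) t (Dset p q r s) z.
Proof.
move=> r0; elim: t => [|t IH] // _ z n n1 Pz H.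
case: t IH H => [|t] IH H.
  by split => //; exists n; split => //; move: H; rewrite mul1r.
rewrite imulS //; split => //.
exists ((s%:R / r%:R) ^+ n), (t.+1%:R * (s%:R / r%:R) ^+ n); split.
  split; first by have := M_unat p q r s 1 n r0 n1; rewrite mul1r.
  by exists n; split => //; rewrite /leG subrr; exact: qmon0.
split.
  apply: (IH isT _ n) => //; first exact: M_unat.
  by rewrite subrr; exact: qmon0.
rewrite /leG.
have -> : (s%:R / r%:R) ^+ n + t.+1%:R * (s%:R / r%:R) ^+ n - z =
   t.+2%:R * (s%:R / r%:R) ^+ n - z :> rat.
  rewrite -(addn1 t.+1) natrD; ring.
exact: H.
Qed.

Theorem proposition2p3 (p q r s : nat) :
  (0 < p)%N -> (0 < q)%N -> (1 < q)%N -> (q < p - q)%N -> coprime p q ->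
  nmon2 q (p - q) s -> s <> 0%N ->
  (0 < r)%N -> (1 < r)%N -> (r < s - r)%N -> coprime r s ->
  (forall t : nat, (0 < t)%N -> (t <= r - 1)%N ->
     ~ (forall z : rat, imul (Mpos p q r s) t (Dset p q r s) z <-> Mpos p q r s z)) /\
  (forall z : rat, imul (Mpos p q r s) r (Dset p q r s) z <-> Mpos p q r s z).
Proof.
move=> p0 q0 q1 qpq cpq As s0 r0 r1 rsr crs.
have rs : (r <= s)%N by lia.
have pq0 : (0 < p - q)%N by lia.
split.
  move=> t t0 tr Heq.
  have Ps : Mpos p q r s s%:R.
    apply: qmon_gen; left; exists (r * s)%N; split; first exact: nmon2_mul.
    by rewrite natrM mulrC mulKf // rnz.
  have [_ [n [n1 H]]] := @tD_bound p q r s t r0 rs t0 _ ((Heq _).2 Ps).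
  case: n n1 H => [|n] // _ H.
  apply: (@notin p q r s n t As r0 rsr crs _ H); lia.
move=> z; split.
  by move=> H; case: (@tD_bound p q r s r r0 rs (ltnW r1) z H).
move=> Pz; have [n [n1 H]] := @M_bound p q r s z As s0 q0 pq0 r0 rsr Pz.
exact: (@tD_intro p q r s r r0 (ltnW r1) z n n1 Pz H).
Qed.
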